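(* Assume the setting below, with each $U_i$ bounded, connected, of positive mass $P(U_i)>0$ and $U_i\neq\mathcal X$, with unique global minimisers of all quality functions, and with all clusterings of each $U_i$ having connected clusters. Then for every $\gamma\ge0$, $$\mathrm{InStab}_{\mathrm{Mapper}}(\{Q^i_{n_i}\}_{i=1}^t,n,P)\le2\Big(P(T_\gamma(f))+P\big(D_\partial(f^n,f)>\gamma\big)+P(n_i=0)\Big),$$ where $P(D_\partial(f^n,f)>\gamma)$ is the probability (over $X\sim P^n$) that the optimal empirical Mapper function satisfies $D_\partial(f^n,f)>\gamma$, and $P(n_i=0)$ is the probability that $n_i=0$ for some $i\in\{1,\dots,t\}$.
   Context: $(\mathcal X,D)$ is a metric space with Borel probability measure $P$, covered by $U_1,\dots,U_t$. For each $i$ fix a finite label set $L_i=\{c^i_1,\dots,c^i_s\}$ (pairwise disjoint). A clustering of $U_i$ is a map $U_i\to L_i$ up to label permutation; $\mathcal F^i$ is the set of these. A Mapper function with components $f_1,\dots,f_t$ is $f(x)=\{f_i(x):x\in U_i\}$. Boundaries: for $A\subseteq U_i$, $\partial A=\{x\in\overline{U_i}:D(x,A)=D(x,\mathcal X\setminus A)=0\}$ with $D(x,A)=\inf_{y\in A}D(x,y)$; $\partial(f_i)=\bigcup_j\partial(f_i^{-1}(c^i_j))\cup\partial U_i$ ($\partial U_i$ the boundary in $\mathcal X$); tubes $T_\gamma(f_i)=\{x\in U_i:D(x,\partial(f_i))\le\gamma\}$ for $\gamma>0$, $T_0(f_i)=\partial(f_i)$, $T_\gamma(f)=\bigcup_iT_\gamma(f_i)$.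 Write $g_i\triangleleft T_\gamma(f_i)$ if for all $x,y\in U_i\setminus T_\gamma(f_i)$, $f_i(x)=f_i(y)\iff g_i(x)=g_i(y)$, and $g\triangleleft T_\gamma(f)$ if this holds for all $i$; $D_\partial(f,g)=\inf\{\gamma>0:f\triangleleft T_\gamma(g),\ g\triangleleft T_\gamma(f)\}$ (clusterings that agree up to permutation off the boundaries are identified). Quality functions: $P_i=P(\cdot\cap U_i)/P(U_i)$. $Q^i:\mathcal F^i\times M_1(U_i)\to\mathbb R$ ($M_1(U_i)$ = Borel probability measures on $U_i$) has a unique global minimiser $f_i$ of $Q^i(\cdot,P_i)$; the optimal Mapper function $f$ has components $f_i$. For $m\ge1$, $Q^i_m$ assigns a real number to each clustering of an $m$-point sample $Y\in U_i^m$ (order-independent) and has a unique minimiser $C^i_m(Y)$; $C^i_0$ is constant. For $X=(X_1,\dots,X_n)\sim P^n$, $X^i$ is the subsample of points lying in $U_i$, $n_i$ its size, and the optimal empirical Mapper function $f^n$ has components $f^n_i=C^i_{n_i}(X^i)$, extended to all of $U_i$ by Voronoi cells (a point gets the label of the nearest sample point, ties broken by smallest index). Instability: for Mapper functions $f,g$ and points $Y_1,\dots,Y_m$, $D_M(f,g)=\min_\pi\frac1m\sum_{j=1}^m\mathbf 1[f(Y_j)\neq\pi g(Y_j)]$, where $\pi=(\pi^1,\dots,\pi^t)$ with $\pi^i$ a permutation of $L_i$ acting label-wise. $\mathrm{InStab}_{\mathrm{Mapper}}(\{Q^i_{n_i}\}_{i=1}^t,n,P)$ is the expectation, over independent $X',X''\sim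 P^n$, of $D_M$ evaluated on the $2n$ points of $(X',X'')$ between the (Voronoi-extended) optimal empirical Mapper functions of $X'$ and of $X''$; this is assumed to be a random variable. *)

(* Defs.v *)
From HB Require Import structures.
From mathcomp Require Import all_boot all_order all_algebra all_fingroup.
From mathcomp Require Import all_classical all_reals all_analysis.

Set Implicit Arguments.
Unset Strict Implicit.
Unset Printing Implicit Defensive.

Import Order.TTheory GRing.Theory Num.Theory.
Local Open Scope classical_set_scope.
Local Open Scope ring_scope.

Section Mapper.
Context {R : realType}.

Section Metric.
Context {X : Type} (D : X -> X -> R).

Definition metric_open (A : set X) : Prop :=
  forall x, A x -> exists2 e : R, 0 < e & forall y, D x y < e -> A y.

Definition is_metric : Prop :=
  [/\ forall x y, 0 <= D x y,
      forall x y, D x y = 0 <-> x = y,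
      forall x y, D x y = D y x &
      forall x y z, D x z <= D x y + D y z].

Definition metric_bounded (A : set X) : Prop :=
  exists x0 (r : R), forall y, A y -> D x0 y <= r.

Definition metric_connected (A : set X) : Prop :=
  forall B C : set X, metric_open B -> metric_open C ->
    A `<=` B `|` C -> A `&` B `&` C = set0 ->
    A `&` B !=set0 -> A `&` C !=set0 -> False.

(* D(x,A) = inf_{y in A} D(x,y)  (= +oo for A empty) *)
Definition dist (x : X) (A : set X) : \bar R :=
  ereal_inf [set (D x y)%:E | y in A].

(* boundary of A relative to the closure of V:
   { x in closure V | D(x,A) = D(x, X \ A) = 0 } *)
Definition bdry (V A : set X) : set X :=
  [set x | dist x V = 0%E /\ dist x A = 0%E /\ dist x (~` A) = 0%E].

End Metric.

Section Setting.
Context {d : measure_display} {X : measurableType d} (D : X -> X -> R)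
        (P : probability X R) (t s : nat) (U : 'I_t -> set X).

(* components of Mapper functions: g i : X -> 'I_s is the clustering of U i
   (only its values on U i matter); the label c of component i stands for
   the label c^i_c, so label sets of different components are disjoint. *)
Definition mapper_val (g : 'I_t -> X -> 'I_s) (x : X) : {set 'I_t * 'I_s} :=
  finset (fun p : 'I_t * 'I_s => (x \in U p.1) && (p.2 == g p.1 x)).

Definition comp_bdry (i : 'I_t) (g : X -> 'I_s) : set X :=
  (\bigcup_(c in [set: 'I_s]) bdry D (U i) (U i `&` (g @^-1` [set c])))
  `|` bdry D setT (U i).

Definition tube (i : 'I_t) (g : X -> 'I_s) (gamma : R) : set X :=
  if gamma == 0 then comp_bdry i g
  else [set x | U i x /\ (dist D x (comp_bdry i g) <= gamma%:E)%E].

Definition Tube (g : 'I_t -> X -> 'I_s) (gamma : R) : set X :=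
  \bigcup_(i in [set: 'I_t]) tube i (g i) gamma.

Definition lhd (i : 'I_t) (h k : X -> 'I_s) (gamma : R) : Prop :=
  forall x y, U i x -> ~ tube i k gamma x -> U i y -> ~ tube i k gamma y ->
    (k x = k y <-> h x = h y).

Definition Dbd (f g : 'I_t -> X -> 'I_s) : \bar R :=
  ereal_inf [set gamma%:E | gamma in
    [set gamma : R | 0 < gamma /\
       forall i, lhd i (f i) (g i) gamma /\ lhd i (g i) (f i) gamma]].

(* Voronoi extension of a clustering c of the sample Y (ties broken by
   smallest index); with an empty sample the constant label c0 is used *)
Definition voronoi (m : nat) (Y : 'I_m -> X) (c : 'I_m -> 'I_s) (c0 : 'I_s)
    (x : X) : 'I_s :=
  match [pick j : 'I_m | [forall k : 'I_m,
          (D x (Y j) < D x (Y k)) || ((D x (Y j) == D x (Y k)) && (j <= k)%N)]]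
  with Some j => c j | None => c0 end.

Definition subsample (n : nat) (Xs : n.-tuple X) (i : 'I_t) : seq X :=
  [seq x <- tval Xs | x \in U i].

Definition n_i (n : nat) (Xs : n.-tuple X) (i : 'I_t) : nat :=
  size (subsample Xs i).

Definition emp_mapper
    (C : forall (i : 'I_t) (m : nat), ('I_m -> X) -> 'I_m -> 'I_s)
    (c0 : 'I_t -> 'I_s) (n : nat) (Xs : n.-tuple X) : 'I_t -> X -> 'I_s :=
  fun i => let Y := fun j => tnth (in_tuple (subsample Xs i)) j in
           voronoi Y (C i _ Y) (c0 i).

Definition DM (f g : 'I_t -> X -> 'I_s) (Y : seq X) : R :=
  (\big[minn/size Y]_(pi : {ffun 'I_t -> {perm 'I_s}})
     count (fun y => mapper_val f y !=
                     mapper_val (fun i x => pi i (g i x)) y) Y)%:R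
  / (size Y)%:R.

(* expectation w.r.t. the product measure P^n on n-samples, as iterated
   integrals (Fubini/Tonelli) *)
Fixpoint iexp (n : nat) : (n.-tuple X -> \bar R) -> \bar R :=
  match n return (n.-tuple X -> \bar R) -> \bar R with
  | 0 => fun h => h [tuple]
  | m.+1 => fun h => (\int[P]_x iexp (fun tl : m.-tuple X => h (cons_tuple x tl)))%E
  end.

Definition probn (n : nat) (A : set (n.-tuple X)) : \bar R :=
  iexp (fun Xs => (\1_A Xs : R)%:E).

Definition InStab
    (C : forall (i : 'I_t) (m : nat), ('I_m -> X) -> 'I_m -> 'I_s)
    (c0 : 'I_t -> 'I_s) (n : nat) : \bar R :=
  iexp (fun X1 : n.-tuple X => iexp (fun X2 : n.-tuple X =>
    (DM (emp_mapper C c0 X1) (emp_mapper C c0 X2) (tval X1 ++ tval X2))%:E)).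

Definition Pcond (i : 'I_t) : set X -> \bar R :=
  fun A => (P (A `&` U i) / P (U i))%E.

End Setting.
End Mapper.

(* Main.v *)
Require Import Defs.
From HB Require Import structures.
From mathcomp Require Import all_boot all_order all_algebra all_fingroup.
From mathcomp Require Import all_classical all_reals all_analysis.
From mathcomp Require Import measurable_realfun.
From mathcomp Require Import ring lra.
Import Order.TTheory GRing.Theory Num.Theory.
Local Open Scope classical_set_scope.
Local Open Scope ring_scope.

Section IntLemmas.
Import HBNNSimple.
Local Open Scope ereal_scope.
Context {R : realType} {d : measure_display} {T : measurableType d}
  (mu : {measure set T -> \bar R}).

Lemma int_mono (F G : T -> \bar R) : (forall x, 0 <= F x) ->
  (forall x, F x <= G x) -> \int[mu]_x F x <= \int[mu]_x G x.
Proof.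
move=> F0 FG.
have G0 x : 0 <= G x by apply: le_trans (F0 x) (FG x).
rewrite !ge0_integralTE //=; apply: ereal_sup_le => _ [h hF <-].
by exists h => //= x; apply: le_trans (hF x) (FG x).
Qed.

Lemma lowerint_add (F G : T -> \bar R) : (forall x, 0 <= F x) ->
  (forall x, 0 <= G x) -> measurable_fun [set: T] G ->
  \int[mu]_x (F x + G x) <= \int[mu]_x F x + \int[mu]_x G x.
Proof.
move=> F0 G0 mG.
have FG0 x : 0 <= F x + G x by rewrite adde_ge0.
rewrite [X in X <= _]ge0_integralTE //=; apply: ge_ereal_sup => _ [h hFG <-].
pose k x := maxe ((h x)%:E - G x) 0.
have mh : measurable_fun setT (fun x => (h x)%:E).
  by apply/measurable_EFinP; exact: measurable_funPT.
have mk : measurable_fun setT k.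
  by apply: measurable_maxe => //; apply: emeasurable_funB.
have k0 x : 0 <= k x by rewrite /k le_max lexx orbT.
rewrite -integralT_nnsfun.
apply: (@le_trans _ _ (\int[mu]_x (k x + G x))).
  apply: ge0_le_integral => //.
  - by move=> x _; rewrite lee_fin.
  - by apply: emeasurable_funD.
  - move=> x _; rewrite /k.
    move: (G0 x); case: (G x) => [r| |] //= r0.
      by rewrite -leeBlDr // le_max lexx.
    by rewrite addeNy maxNye add0e leey.
rewrite ge0_integralD //; try by move=> x _; [exact: k0|exact: G0].
rewrite leeD2r //; apply: int_mono => // x; rewrite /k ge_max F0 andbT.
move: (hFG x) (G0 x); case: (G x) => [r| |] //= hle r0.
  by rewrite EFinN leeBlDr.
by rewrite addeNy leNye.
Qed.

End IntLemmas.

Section IexpLemmas.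
Local Open Scope ereal_scope.
Context {R : realType} {d : measure_display} {X : measurableType d}
  (P : probability X R).

Let PsetT : (P : measure X R) [set: X] = 1 := probability_setT P.

Lemma iexpS m (h : m.+1.-tuple X -> \bar R) :
  iexp P h = \int[P]_x iexp P (fun tl : m.-tuple X => h (cons_tuple x tl)).
Proof. by []. Qed.

Lemma iexp_ge0 n (h : n.-tuple X -> \bar R) : (forall Xs, 0 <= h Xs) ->
  0 <= iexp P h.
Proof.
elim: n h => [|m IH] h h0; first exact: h0.
rewrite iexpS; apply: integral_ge0 => x _; exact: IH.
Qed.

Lemma iexp_mono n (h1 h2 : n.-tuple X -> \bar R) : (forall Xs, 0 <= h1 Xs) ->
  (forall Xs, h1 Xs <= h2 Xs) -> iexp P h1 <= iexp P h2.
Proof.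
elim: n h1 h2 => [|m IH] h1 h2 h10 h12; first exact: h12.
rewrite !iexpS; apply: int_mono => x; first exact: iexp_ge0.
exact: IH.
Qed.

Lemma iexp_cst n (c : \bar R) : iexp P (fun _ : n.-tuple X => c) = c.
Proof.
elim: n => [|m IH] //; rewrite iexpS.
under eq_integral do rewrite IH.
have h1 : (P : measure X R) [set: X] = 1 := probability_setT P.
by rewrite (integral_cst P (@measurableT _ X) c) h1 mule1.
Qed.

Definition nice n (G : n.-tuple X -> \bar R) := forall F, (forall Xs, 0 <= F Xs) ->
  iexp P (fun Xs => F Xs + G Xs) <= iexp P F + iexp P G.
Arguments nice [n] G.

Lemma count_nice (T : set X) (pT : R) : measurable T -> P T = pT%:E ->
  forall n (a c : R), (0 <= a)%R -> (0 <= c)%R ->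
  let H := fun Xs : n.-tuple X =>
    (c + a * (count (fun y => y \in T) (tval Xs))%:R)%:E in
  nice H /\ iexp P H = (c + a * n%:R * pT)%:E.
Proof.
move=> mT PT n; elim: n => [|m IH] a c a0 c0 H.
  split; first by move=> F F0; rewrite /= lexx.
  by rewrite /H /= !mulr0 mul0r.
have Hc x : (fun tl : m.-tuple X => H (cons_tuple x tl)) =
   (fun tl => ((c + a * (x \in T)%:R) + a * (count (fun y => y \in T) (tval tl))%:R)%:E).
  by apply/funext => tl; rewrite /H /= natrD; congr EFin; ring.
have c'0 x : (0 <= c + a * (x \in T)%:R)%R by rewrite addr_ge0 // mulr_ge0.
have iH x : iexp P (fun tl : m.-tuple X => H (cons_tuple x tl)) =
    ((c + a * m%:R * pT) + a * \1_T x)%:E.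
  rewrite Hc (IH a _ a0 (c'0 x)).2 indicE; congr EFin; ring.
have H0 Xs : 0 <= H Xs by rewrite lee_fin addr_ge0 // mulr_ge0.
have pT0 : (0 <= pT)%R by rewrite -lee_fin -PT measure_ge0.
have miH : measurable_fun [set: X]
    (fun x => iexp P (fun tl : m.-tuple X => H (cons_tuple x tl))).
  rewrite (_ : (fun x => _) = (fun x => ((c + a * m%:R * pT) + a * \1_T x)%:E)).
    apply/measurable_EFinP; apply: measurable_funD => //.
    by apply: measurable_funM => //; exact: measurable_indic.
  by apply/funext => x; rewrite iH.
split.
  move=> F F0; rewrite !iexpS.
  have Fc0 x : 0 <= iexp P (fun tl : m.-tuple X => F (cons_tuple x tl)).
    by apply: iexp_ge0 => tl; exact: F0.
  have Hc0 x : 0 <= iexp P (fun tl : m.-tuple X => H (cons_tuple x tl)).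
    by apply: iexp_ge0 => tl; exact: H0.
  have := lowerint_add P _ _ Fc0 Hc0 miH.
  apply: le_trans.
  apply: int_mono => x; first by apply: iexp_ge0 => Xs; rewrite adde_ge0.
  have := (IH a _ a0 (c'0 x)).1 (fun tl : m.-tuple X => F (cons_tuple x tl)) (fun tl => F0 _).
  rewrite -(Hc x) /=; apply: le_trans; rewrite le_eqVlt; apply/orP; left; apply/eqP; congr iexp.
  by apply/funext => tl; have := congr1 (fun f => f tl) (Hc x) => /= ->.
rewrite iexpS; under eq_integral do rewrite iH EFinD.
rewrite ge0_integralD //.
- rewrite (integral_cst P (@measurableT _ X)) PsetT mule1.
  under eq_integral do rewrite EFinM.
  rewrite ge0_integralZl_EFin // ?integral_indic // ?setIT ?PT.
  + have PT' : (P : measure X R) T = pT%:E := PT.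
    by rewrite PT' -EFinM -EFinD; congr EFin; rewrite -natr1; ring.
  + by apply/measurable_EFinP; exact: measurable_indic.
- by move=> x _; rewrite lee_fin addr_ge0 // !mulr_ge0.
- by move=> x _; rewrite lee_fin mulr_ge0 // indicE.
- by apply/measurable_EFinP; apply: measurable_funM => //; exact: measurable_indic.
Qed.

End IexpLemmas.

Lemma ext_perm (T : finType) (A : {set T}) (phi : T -> T) :
  {in A &, injective phi} -> exists pi : {perm T}, {in A, pi =1 phi}.
Proof.
move=> phiI.
set B : {set T} := imset phi (mem A).
set ea := enum (~: A); set eb := enum (~: B).
have sz : size ea = size eb.
  rewrite /ea /eb -!cardE.
  have := cardsC A; have := cardsC B; rewrite card_in_imset //.
  by move=> h1 h2; apply/eqP; rewrite -(eqn_add2l #|A|) h2 h1.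
pose h x := if x \in A then phi x else nth x eb (index x ea).
have hI : injective h.
  have nthB x : x \notin A -> nth x eb (index x ea) \in ~: B.
    move=> xA; rewrite -mem_enum; apply: mem_nth; rewrite -sz index_mem.
    by rewrite mem_enum inE.
  move=> x y; rewrite /h.
  case: (boolP (x \in A)) => xA; case: (boolP (y \in A)) => yA.
  - exact: phiI.
  - move=> e; have := nthB y yA; rewrite -e inE.
    by rewrite (imset_f phi xA).
  - move=> e; have := nthB x xA; rewrite e inE.
    by rewrite (imset_f phi yA).
  - have ix : (index x ea < size eb)%N by rewrite -sz index_mem mem_enum inE.
    have iy : (index y ea < size eb)%N by rewrite -sz index_mem mem_enum inE.
    rewrite (set_nth_default x y iy) => /eqP.
    rewrite nth_uniq ?enum_uniq // => /eqP e.
    have xe : x \in ea by rewrite mem_enum inE.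
    have ye : y \in ea by rewrite mem_enum inE.
    by rewrite -(nth_index x xe) e nth_index.
exists (perm hI) => x xA; by rewrite permE /h xA.
Qed.

Lemma perm_match (X : Type) (s : nat) (W : set X) (g1 g2 : X -> 'I_s) :
  (forall x y, W x -> W y -> (g2 x = g2 y <-> g1 x = g1 y)) ->
  exists pi : {perm 'I_s}, forall x, W x -> g1 x = pi (g2 x).
Proof.
move=> Hg.
have : forall c : 'I_s, exists c' : 'I_s,
    forall x, W x -> g2 x = c -> g1 x = c'.
  move=> c; case: (pselect (exists x, W x /\ g2 x = c)) => [[x0 [Wx0 e0]]|nx].
    exists (g1 x0) => x Wx ex; apply/(Hg x x0 Wx Wx0); by rewrite ex e0.
  by exists c => x Wx ex; exfalso; apply: nx; exists x.
move=> /choice [phi Hphi].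
pose A : {set 'I_s} := finset (fun c => `[< exists x, W x /\ g2 x = c >]).
have phiI : {in A &, injective phi}.
  move=> c1 c2 h1 h2 e; move: h1 h2; rewrite !inE => -[x1 [W1 e1]] [x2 [W2 e2]].
  rewrite -e1 -e2; apply/(Hg x1 x2 W1 W2).
  by rewrite (Hphi c1 x1 W1 e1) (Hphi c2 x2 W2 e2).
have [pi Hpi] := @ext_perm _ A phi phiI.
exists pi => x Wx; rewrite Hpi; first exact: (Hphi _ x Wx erefl).
by rewrite inE; apply/asboolP; exists x.
Qed.

Section MetricLemmas.
Local Open Scope ereal_scope.
Context {R : realType} {X : Type} (D : X -> X -> R) (HD : is_metric D).

Lemma my_dist_ge0 x A : 0 <= dist D x A.
Proof.
case: HD => D0 _ _ _.
by apply/ereal_infP => _ [y _ <-]; rewrite lee_fin.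
Qed.

Lemma my_dist_tri x y A : dist D x A <= (D x y)%:E + dist D y A.
Proof.
case: HD => D0 _ _ Dtri.
rewrite addeC -leeBlDr //; apply/ereal_infP => _ [z Az <-].
rewrite leeBlDr //; apply: le_trans (ereal_inf_lbound _) _.
  by exists z.
by rewrite -EFinD lee_fin addrC Dtri.
Qed.

Lemma my_open_gt A (r : R) : metric_open D [set x | r%:E < dist D x A].
Proof.
case: HD => D0 _ _ _.
move=> x /= rx.
have Hy y : dist D x A <= (D x y)%:E + dist D y A by exact: my_dist_tri.
move: rx Hy; case Ex: (dist D x A) => [v| |] // rv Hy.
  exists (v - r)%R; first by rewrite subr_gt0 -lte_fin.
  move=> y Dxy; move: (Hy y) (my_dist_ge0 y A).
  case: (dist D y A) => [w| |] //= h _.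
    rewrite lte_fin; rewrite -EFinD lee_fin in h; rewrite lte_fin in rv; lra.
  by rewrite ltry.
exists 1%R => // y _; move: (Hy y) (my_dist_ge0 y A).
by case: (dist D y A) => [w| |] //= h _; rewrite leye_eq in h.
Qed.

Lemma my_bdry_openC V A : metric_open D (~` bdry D V A).
Proof.
move=> x /= nb.
have H0 z B : dist D z B != 0 -> 0%R%:E < dist D z B.
  by move=> h; rewrite lt_neqAle eq_sym h my_dist_ge0.
have [i1|i2] : dist D x V != 0 \/ (dist D x A != 0 \/ dist D x (~` A) != 0).
  case: (eqVneq (dist D x V) 0) => a; last by left.
  case: (eqVneq (dist D x A) 0) => b; last by right; left.
  case: (eqVneq (dist D x (~` A)) 0) => c; last by right; right.
  by exfalso; apply: nb.
- have [e e0 He] := my_open_gt V 0 x (H0 _ _ i1).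
  exists e => // y /He /= h [h1 _]; by rewrite h1 ltxx in h.
- case: i2 => i2.
    have [e e0 He] := my_open_gt A 0 x (H0 _ _ i2).
    exists e => // y /He /= h [_ [h1 _]]; by rewrite h1 ltxx in h.
  have [e e0 He] := my_open_gt (~` A) 0 x (H0 _ _ i2).
  exists e => // y /He /= h [_ [_ h1]]; by rewrite h1 ltxx in h.
Qed.

Lemma my_open_setI A B : metric_open D A -> metric_open D B -> metric_open D (A `&` B).
Proof.
move=> oA oB x [Ax Bx].
have [e1 e10 H1] := oA x Ax; have [e2 e20 H2] := oB x Bx.
exists (Num.min e1 e2); first by rewrite lt_min e10 e20.
by move=> y; rewrite lt_min => /andP [y1 y2]; split; [apply: H1|apply: H2].
Qed.

Lemma my_open_bigcap (I : finType) (F : I -> set X) :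
  (forall i, metric_open D (F i)) -> metric_open D (\bigcap_(i in [set: I]) F i).
Proof.
move=> oF x Fx.
have : forall i, exists e : R, (0 < e)%R /\ forall y, (D x y < e)%R -> F i y.
  move=> i; have [e e0 He] := oF i x (Fx i Logic.I); by exists e.
move=> /choice [e He].
exists (\big[Num.min/1%R]_i e i).
  by apply: lt_bigmin => // i _; exact: (He i).1.
move=> y Dy i _; apply: (He i).2; apply: lt_le_trans Dy _.
exact: bigmin_le.
Qed.

Lemma my_dist_pos_open S x : metric_open D (~` S) -> ~ S x -> 0%R%:E < dist D x S.
Proof.
move=> oS Sx; have [e e0 He] := oS x Sx.
apply: (@lt_le_trans _ _ e%:E); first by rewrite lte_fin.
apply/ereal_infP => _ [z Sz <-]; rewrite lee_fin leNgt; apply/negP => /He.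
by [].
Qed.

End MetricLemmas.

Lemma bigminn_le_seq (I : eqType) (x : nat) (F : I -> nat) (r : seq I) (j : I) :
  j \in r -> (\big[minn/x]_(i <- r) F i <= F j)%N.
Proof.
elim: r => [|a r IH] //; rewrite big_cons inE => /orP [/eqP <-|/IH h].
  exact: geq_minl.
exact: leq_trans (geq_minr _ _) h.
Qed.

Lemma bigminn_le (I : finType) (x : nat) (F : I -> nat) (j : I) :
  (\big[minn/x]_(i : I) F i <= F j)%N.
Proof. by apply: bigminn_le_seq; exact: mem_index_enum. Qed.

Section Prob.
Context {R : realType} {d : measure_display} {X : measurableType d}
  (D : X -> X -> R) (HD : is_metric D) {t s : nat} (U : 'I_t -> set X).

Lemma comp_bdry_openC i (g : X -> 'I_s) : metric_open D (~` comp_bdry D U i g).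
Proof.
rewrite /comp_bdry setCU setC_bigcup; apply: my_open_setI.
  by apply: my_open_bigcap => c; exact: my_bdry_openC.
exact: my_bdry_openC.
Qed.

Lemma off_tube_pos i (g : X -> 'I_s) (gamma : R) x : 0 <= gamma -> U i x ->
  ~ tube D U i g gamma x -> (gamma%:E < dist D x (comp_bdry D U i g))%E.
Proof.
move=> g0 Ux; rewrite /tube; case: eqP => [->|_] nt.
  exact: my_dist_pos_open (comp_bdry_openC i g) nt.
by rewrite ltNge; apply/negP => h; apply: nt.
Qed.

Lemma Dbd_pair (g f : 'I_t -> X -> 'I_s) (gamma : R) : 0 <= gamma ->
  ~ (gamma%:E < Dbd D U g f)%E -> forall i x y, U i x -> U i y ->
  ~ tube D U i (f i) gamma x -> ~ tube D U i (f i) gamma y ->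
  (f i x = f i y <-> g i x = g i y).
Proof.
move=> g0 nB i x y Ux Uy tx ty.
have px := off_tube_pos i (f i) gamma x g0 Ux tx; have py := off_tube_pos i (f i) gamma y g0 Uy ty.
have : (Dbd D U g f < mine (dist D x (comp_bdry D U i (f i)))
                          (dist D y (comp_bdry D U i (f i))))%E.
  by apply: le_lt_trans (_ : _ <= gamma%:E)%E _; [rewrite leNgt; apply/negP|rewrite lt_min px py].
move=> /ereal_inf_lt [_ [g' [g'0 Hg'] <-]]; rewrite lt_min => /andP [lx ly].
have nt z : (g'%:E < dist D z (comp_bdry D U i (f i)))%E -> ~ tube D U i (f i) g' z.
  rewrite /tube; case: eqP => [e|_]; first by rewrite e ltxx in g'0.
  by move=> h [_ h']; move: (lt_le_trans h h'); rewrite ltxx.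
exact: ((Hg' i).1 x y Ux (nt _ lx) Uy (nt _ ly)).
Qed.

Lemma Tube_meas (Hborel : (@measurable d X) = <<s metric_open D >>)
  (HUmeas : forall i, measurable (U i)) (f : 'I_t -> X -> 'I_s) (gamma : R) :
  measurable (Tube D U f gamma).
Proof.
have mo A : metric_open D A -> measurable A.
  by move=> oA; rewrite Hborel; exact: sub_sigma_algebra.
have mC A : metric_open D (~` A) -> measurable A.
  by move=> oA; rewrite -[A]setCK; apply: measurableC; exact: mo.
apply: fin_bigcup_measurable; first exact: finite_finset.
move=> i _; rewrite /tube; case: eqP => _.
  exact/mC/comp_bdry_openC.
rewrite (_ : [set x | _] = U i `&` ~` [set x | gamma%:E < dist D x (comp_bdry D U i (f i))]%E).
  apply: measurableI => //; apply: measurableC; apply: mo.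
  exact: (my_open_gt D HD).
apply/seteqP; split => x /= [h1 h2]; split => //.
  by move=> h; move: (lt_le_trans h h2); rewrite ltxx.
by rewrite leNgt; apply/negP.
Qed.

Lemma DM_ge0 (g1 g2 : 'I_t -> X -> 'I_s) Y : (0 : R) <= DM U g1 g2 Y.
Proof. by rewrite /DM divr_ge0. Qed.

Lemma DM_le1 (g1 g2 : 'I_t -> X -> 'I_s) Y : (DM U g1 g2 Y : R) <= 1.
Proof.
rewrite /DM; set m := (\big[minn/size Y]_pi _)%N.
have mY : (m <= size Y)%N.
  rewrite /m; elim/big_ind: _ => // [a b ha hb|pi _]; last exact: count_size.
  by apply: leq_trans (geq_minl a b) ha.
have [->|Y0] := eqVneq (size Y) 0%N; first by rewrite invr0 mulr0.
by rewrite ler_pdivrMr ?ltr0n ?lt0n // mul1r ler_nat.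
Qed.

Lemma DM_le_count (g1 g2 : 'I_t -> X -> 'I_s) Y (T : set X)
    (pi : {ffun 'I_t -> {perm 'I_s}}) :
  (forall y, ~ T y -> forall i, U i y -> g1 i y = pi i (g2 i y)) ->
  (DM U g1 g2 Y : R) <= (count (fun y => y \in T) Y)%:R / (size Y)%:R.
Proof.
move=> Hg; rewrite /DM ler_wpM2r ?invr_ge0 // ler_nat.
apply: leq_trans (bigminn_le _ _ _ pi) _.
apply: sub_count => y /=; apply: contraR => yT.
have nT : ~ T y by move=> h; move: yT; rewrite mem_set.
apply/eqP/setP => -[i c]; rewrite !inE /=.
case: (boolP (y \in U i)) => //= yU.
by rewrite (Hg y nT i (set_mem yU)).
Qed.

End Prob.

Theorem theorem7p1
  (R : realType) (d : measure_display) (X : measurableType d)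
  (D : X -> X -> R) (HD : is_metric D)
  (Hborel : (@measurable d X) = <<s metric_open D >>)
  (P : probability X R)
  (t s : nat) (U : 'I_t -> set X)
  (Hcover : forall x : X, exists i, U i x)
  (HUmeas : forall i, measurable (U i))
  (HUbdd : forall i, metric_bounded D (U i))
  (HUconn : forall i, metric_connected D (U i))
  (HUpos : forall i, (0 < P (U i))%E)
  (HUneq : forall i, U i <> setT)
  (* population quality functions Q^i : clusterings x measures -> R *)
  (Q : 'I_t -> (X -> 'I_s) -> (set X -> \bar R) -> R)
  (HQinv : forall i (g h : X -> 'I_s) (sigma : {perm 'I_s}) mu,
     (forall x, U i x -> h x = sigma (g x)) -> Q i h mu = Q i g mu)
  (* optimal Mapper function *)
  (f : 'I_t -> X -> 'I_s)
  (Hfmin : forall i (g : X -> 'I_s),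
     Q i (f i) (Pcond P U i) <= Q i g (Pcond P U i) /\
     (Q i g (Pcond P U i) = Q i (f i) (Pcond P U i) ->
        exists sigma : {perm 'I_s}, forall x, U i x -> g x = sigma (f i x)))
  (* empirical quality functions Q^i_m and their minimisers C^i_m *)
  (Qm : forall (i : 'I_t) (m : nat), ('I_m -> X) -> ('I_m -> 'I_s) -> R)
  (HQm_order : forall i m (Y : 'I_m -> X) (c : 'I_m -> 'I_s) (rho : {perm 'I_m}),
     Qm i m (Y \o rho) (c \o rho) = Qm i m Y c)
  (HQm_label : forall i m (Y : 'I_m -> X) (c : 'I_m -> 'I_s) (sigma : {perm 'I_s}),
     Qm i m Y (sigma \o c) = Qm i m Y c)
  (C : forall (i : 'I_t) (m : nat), ('I_m -> X) -> 'I_m -> 'I_s)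
  (c0 : 'I_t -> 'I_s)
  (HCmin : forall i m (Y : 'I_m.+1 -> X), (forall j, U i (Y j)) ->
     forall c : 'I_m.+1 -> 'I_s,
       Qm i m.+1 Y (C i m.+1 Y) <= Qm i m.+1 Y c /\
       (Qm i m.+1 Y c = Qm i m.+1 Y (C i m.+1 Y) ->
          exists sigma : {perm 'I_s}, forall j, c j = sigma (C i m.+1 Y j)))
  (* all clusterings have connected clusters *)
  (Hfconn : forall i (c : 'I_s), metric_connected D (U i `&` (f i @^-1` [set c])))
  (HCconn : forall i m (Y : 'I_m -> X), (forall j, U i (Y j)) ->
     forall c : 'I_s,
       metric_connected D (U i `&` (voronoi D Y (C i m Y) (c0 i) @^-1` [set c])))
  (n : nat) (gamma : R) (Hgamma : 0 <= gamma)
  (* InStab is a random variable; the events below are measurable *)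
  (HDMmeas : measurable_fun [set: n.-tuple X * n.-tuple X]
     (fun p : n.-tuple X * n.-tuple X =>
        (DM U (emp_mapper D U C c0 p.1) (emp_mapper D U C c0 p.2)
            (tval p.1 ++ tval p.2) : R)))
  (HDbdmeas : measurable [set Xs : n.-tuple X |
                (gamma%:E < Dbd D U (emp_mapper D U C c0 Xs) f)%E])
  : (InStab D P U C c0 n <=
     2%:E * (P (Tube D U f gamma)
             + probn P [set Xs : n.-tuple X |
                 (gamma%:E < Dbd D U (emp_mapper D U C c0 Xs) f)%E]
             + probn P [set Xs : n.-tuple X | exists i, n_i U Xs i = 0%N]))%E.
Proof.
pose B := [set Xs : n.-tuple X | (gamma%:E < Dbd D U (emp_mapper D U C c0 Xs) f)%E].
pose Z := [set Xs : n.-tuple X | exists i, n_i U Xs i = 0%N].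
pose T := Tube D U f gamma.
have mT : measurable T := Tube_meas D HD U Hborel HUmeas f gamma.
have probn01 (A : set (n.-tuple X)) : (0 <= probn P A)%E /\ (probn P A <= 1)%E.
  split; first by apply: iexp_ge0 => Xs; rewrite lee_fin indicE ler0n.
  rewrite /probn -(iexp_cst P n 1); apply: iexp_mono => Xs.
    by rewrite lee_fin indicE ler0n.
  by rewrite lee_fin indicE; case: (Xs \in A) => /=; rewrite ?ler01 ?lexx.
have fin01 (v : \bar R) : (0 <= v)%E -> (v <= 1)%E -> v = (fine v)%:E /\ 0 <= fine v.
  move=> h0 h1; have vf : v \is a fin_num.
    by rewrite ge0_fin_numE // (le_lt_trans h1) ?ltry.
  by rewrite fineK //; split => //; rewrite fine_ge0.
have PT : P T = (fine (P T))%:E.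
  apply/esym; apply: fineK; rewrite ge0_fin_numE; last exact: measure_ge0.
  exact: (le_lt_trans (probability_le1 P mT) (ltry _)).
have pT0 : 0 <= fine (P T) by rewrite fine_ge0 // measure_ge0.
set pT := fine (P T).
have [PB pB0] := fin01 _ (probn01 B).1 (probn01 B).2.
set pB := fine (probn P B).
have [PZ pZ0] := fin01 _ (probn01 Z).1 (probn01 Z).2.
set pZ := fine (probn P Z).
pose a : R := ((n + n)%:R)^-1.
have a0 : 0 <= a by rewrite invr_ge0.
pose cnt := fun Xs : n.-tuple X => (count (fun y => y \in T) (tval Xs))%:R : R.
have cnt0 Xs : 0 <= a * cnt Xs by rewrite mulr_ge0.
have ind0 Xs : 0 <= \1_B Xs :> R by rewrite indicE.
have key : forall X1 X2 : n.-tuple X,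
  ((DM U (emp_mapper D U C c0 X1) (emp_mapper D U C c0 X2) (tval X1 ++ tval X2))%:E
   <= (\1_B X2)%:E + ((a * cnt X1 + \1_B X1) + a * cnt X2)%:E)%E.
  move=> X1 X2.
  case: (pselect (B X1)) => b1.
    rewrite -EFinD lee_fin; apply: le_trans (DM_le1 _ _ _ _) _.
    have := ind0 X2; have := cnt0 X1; have := cnt0 X2.
    rewrite [\1_B X1]indicE (mem_set b1) (_ : true%:R = 1 :> R) //; lra.
  case: (pselect (B X2)) => b2.
    rewrite -EFinD lee_fin; apply: le_trans (DM_le1 _ _ _ _) _.
    have := ind0 X1; have := cnt0 X1; have := cnt0 X2.
    rewrite [\1_B X2]indicE (mem_set b2) (_ : true%:R = 1 :> R) //; lra.
  have hpair i : exists pi : {perm 'I_s}, forall x,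
      (U i x /\ ~ tube D U i (f i) gamma x) ->
      emp_mapper D U C c0 X1 i x = pi (emp_mapper D U C c0 X2 i x).
    apply: perm_match => x y [Ux tx] [Uy ty].
    have h1 := Dbd_pair D HD U (emp_mapper D U C c0 X1) f gamma Hgamma b1 i x y Ux Uy tx ty.
    have h2 := Dbd_pair D HD U (emp_mapper D U C c0 X2) f gamma Hgamma b2 i x y Ux Uy tx ty.
    by split => h; [apply/h1/h2|apply/h2/h1].
  have [pis Hpis] := choice hpair.
  have hyp : forall y, ~ T y -> forall i, U i y ->
      emp_mapper D U C c0 X1 i y = [ffun i => pis i] i (emp_mapper D U C c0 X2 i y).
    move=> y nT i Uy; rewrite ffunE; apply: Hpis; split => // ti; apply: nT.
    by exists i.
  have := @DM_le_count R _ _ _ _ U (emp_mapper D U C c0 X1) (emp_mapper D U C c0 X2)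
    (tval X1 ++ tval X2) T [ffun i => pis i] hyp.
  rewrite count_cat size_cat !size_tuple => hDM.
  rewrite -EFinD lee_fin; apply: le_trans hDM _.
  have := ind0 X1; have := ind0 X2; rewrite /cnt /a natrD; nra.
have PB' : iexp P (fun Xs : n.-tuple X => (\1_B Xs)%:E) = pB%:E by exact: PB.
rewrite /InStab.
apply: (@le_trans _ _ (iexp P (fun X1 : n.-tuple X => iexp P (fun X2 : n.-tuple X =>
    (\1_B X2)%:E + ((a * cnt X1 + \1_B X1) + a * cnt X2)%:E)))).
  apply: iexp_mono => X1.
    by apply: iexp_ge0 => X2; rewrite lee_fin DM_ge0.
  apply: iexp_mono => X2; first by rewrite lee_fin DM_ge0.
  exact: key.
apply: (@le_trans _ _ (iexp P (fun X1 : n.-tuple X =>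
    (\1_B X1)%:E + ((pB + a * n%:R * pT) + a * cnt X1)%:E))).
  apply: iexp_mono => X1.
    by apply: iexp_ge0 => X2; rewrite adde_ge0 // lee_fin // addr_ge0 // addr_ge0.
  have c0' : 0 <= a * cnt X1 + \1_B X1 by rewrite addr_ge0.
  move: (count_nice P T pT mT PT n a _ a0 c0') => /= [Hn Hi].
  apply: le_trans (Hn (fun Xs => (\1_B Xs)%:E) _) _.
    by move=> Xs; rewrite lee_fin.
  rewrite Hi PB' -!EFinD lee_fin; lra.
have c1 : 0 <= pB + a * n%:R * pT by rewrite addr_ge0 // !mulr_ge0.
move: (count_nice P T pT mT PT n a _ a0 c1) => /= [Hn Hi].
apply: le_trans (Hn (fun Xs => (\1_B Xs)%:E) _) _.
  by move=> Xs; rewrite lee_fin.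
rewrite Hi PB' PT PB PZ -!EFinD -EFinM lee_fin.
have han : a * n%:R * 2 <= 1.
  case: (posnP n) => [->|n0]; first by rewrite mulr0 mul0r ler01.
  have h : a * (n + n)%:R = 1.
    by rewrite mulVf // pnatr_eq0 addn_eq0 negb_and -lt0n n0.
  rewrite natrD in h; lra.
change (pB + (pB + a * n%:R * pT + a * n%:R * pT) <= 2 * (pT + pB + pZ)).
have h1 : 0 <= (1 - a * n%:R * 2) * pT by apply: mulr_ge0 => //; lra.
have h2 : 0 <= pZ := pZ0.
have hpT : 0 <= pT := pT0.
nra.
Qed.
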